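(* Let $p\neq 2$ be a prime and $G=Z_{p^{\lambda_1}}\times\cdots\times Z_{p^{\lambda_n}}$ with $\lambda_1\le\cdots\le\lambda_n$. Then for any $i\in\{1,\dots,n\}$, $\mathrm{Char}(G)\cong\mathrm{Char}(G\times Z_{p^{\lambda_i}})$.
   Context: $\mathrm{Char}(G)$ denotes the lattice of characteristic subgroups of $G$. *)

(* Defs.v *)
From mathcomp Require Import all_boot all_fingroup all_solvable all_algebra.
Set Implicit Arguments. Unset Strict Implicit. Unset Printing Implicit Defensive.
Import GroupScope.

Definition Char (gT : finGroupType) (G : {group gT}) : {set {group gT}} :=
  [set H : {group gT} | H \char G].

(* Lattice isomorphism Char(G) ~= Char(K): a bijection from Char(G) onto
   Char(K) that preserves and reflects inclusion (an order isomorphism of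
   lattices, which is the same as a lattice isomorphism). *)
Definition char_lattice_iso (gT hT : finGroupType)
    (G : {group gT}) (K : {group hT}) : Prop :=
  exists f : {group gT} -> {group hT},
    {in Char G &, forall A B, (f A \subset f B) = (A \subset B)} /\
    f @: Char G = Char K.

(* Main.v *)
Require Import Defs.
From mathcomp Require Import all_boot all_fingroup all_solvable all_algebra.
From mathcomp Require Import zify.
Set Implicit Arguments. Unset Strict Implicit. Unset Printing Implicit Defensive.
Import GroupScope.


Section Helpers.
Variable gT : finGroupType.

Lemma char_intro (G K : {group gT}) : K \subset G ->
  (forall f : {morphism G >-> gT}, 'injm f -> f @* G = G ->
     forall k, k \in K -> f k \in K) -> K \char G.
Proof.
move=> sKG H; apply/charP; split=> // f injf fG.
apply/(morphim_fixP injf _ sKG); apply/subsetP=> y /morphimP[k _ kK ->]; exact: H.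
Qed.

Lemma char_elim (G K : {group gT}) (u : gT -> gT) : K \char G ->
  {in G &, {morph u : a b / a * b}} -> {in G, forall g, u g \in G} ->
  {in G, forall g, u g = 1 -> g = 1} -> {in K, forall k, u k \in K}.
Proof.
move=> /charP[sKG chK] uM uG u1 k kK.
have uM' : morphic G u by apply/morphicP.
pose f := morphm_morphism uM'.
have injf : 'injm f.
  apply/subsetP=> g gk; rewrite inE; apply/eqP.
  have gG : g \in G by apply: (subsetP (subsetIl _ _)) gk.
  by apply: u1 => //; move/(kerP f gG): gk.
have fG : f @* G = G.
  apply/(morphim_fixP injf _ (subxx _))/subsetP=> y /morphimP[g _ gG ->]; exact: uG.
have := chK f injf fG; move=> <-.
by apply: mem_morphim => //; apply: (subsetP sKG).
Qed.
End Helpers.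

Lemma in_morph1 (gT : finGroupType) (G : {group gT}) (e : gT -> gT) :
  {in G &, {morph e : a b / a * b}} -> e 1 = 1.
Proof. by move=> eM; apply: (mulgI (e 1)); rewrite -eM ?mulg1. Qed.

Lemma FI (gT : finGroupType) (G H : {group gT}) (p : nat) (I : finType)
    (pi : I -> gT -> gT) (y : I -> gT) :
  prime p -> p != 2 -> abelian G ->
  (forall j, {in G &, {morph pi j : u v / u * v}}) ->
  (forall j, {in G, forall g, pi j g \in <[y j]>}) ->
  (forall j, <[y j]> \subset G) ->
  (forall j z k, z \in <[y j]> -> coprime k p -> z ^+ k = 1 -> z = 1) ->
  (forall g, g \in G -> g = \prod_j pi j g) ->
  H \char G ->
  forall e : gT -> gT, {in G &, {morph e : u v / u * v}} ->
  {in G, forall g, e g \in G} ->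
  {in H, forall h, e h \in H}.
Proof.
move=> pP p2 abG piM piY yG ordP dec chH e eM eG h hH.
have sHG : H \subset G by case/charP: chH.
have hG : h \in G by apply: (subsetP sHG).
have eM' : morphic G e by apply/morphicP.
rewrite (dec h hG).
have -> : e (\prod_j pi j h) = \prod_j e (pi j h).
  have := @morph_prod _ _ G (morphm_morphism eM') I (index_enum I) predT (fun j => pi j h).
  by apply => j _; apply: (subsetP (yG j)); apply: piY.
apply: group_prod => j _.
have comm : {in G &, forall a b, a * b = b * a}.
  by move=> a b aG bG; apply: (centsP abG).
set Y := <[y j]>.
have YG : {in Y, forall z, z \in G} by move=> z; apply: (subsetP (yG j)).
have e1 : e 1 = 1 by apply: in_morph1 eM.
have pi1 : pi j 1 = 1 by apply: in_morph1 (piM j).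
have yjG : y j \in G by apply: YG; apply: cycle_id.
have [c yc] : exists c, pi j (e (y j)) = y j ^+ c.
  have : pi j (e (y j)) \in Y by apply: piY; apply: eG.
  by case/cycleP => c ->; exists c.
have wX : forall z, z \in Y -> pi j (e z) = z ^+ c.
  have wM : morphic G (fun g => pi j (e g)).
    apply/morphicP => a b aG bG /=; rewrite eM // piM //; exact: eG.
  move=> z /cycleP[k ->].
  have := morphX (morphm_morphism wM) k yjG; rewrite /= /morphm /= => ->.
  by rewrite yc -!expgM mulnC.
set z := pi j h.
have zY : z \in Y by apply: piY.
have ezG : forall g, g \in G -> e (pi j g) \in G.
  by move=> g gG; apply: eG; apply: YG; apply: piY.
have [cop1 | ncop1] := boolP (coprime c.+1 p).
  pose u := fun g => g * e (pi j g).
  have: u h \in H.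
    apply: (char_elim chH) => //.
    - move=> a b aG bG; rewrite /u piM // eM; try by apply: YG; apply: piY.
      rewrite !mulgA; congr (_ * _); rewrite -!mulgA; congr (_ * _).
      by apply: comm => //; apply: ezG.
    - by move=> g gG; rewrite /u groupM //; apply: ezG.
    - move=> g gG ug1.
      have zg : pi j g \in Y by apply: piY.
      have : pi j g ^+ c.+1 = 1.
        by rewrite expgS -wX // -piM ?ezG // -/(u g) ug1 pi1.
      move/(ordP _ _ _ zg cop1) => z1.
      by move: ug1; rewrite /u z1 e1 mulg1.
  by rewrite /u groupMl.
have c1 : c != 1%N.
  apply/eqP=> c1; move: ncop1; rewrite c1 coprime_sym prime_coprime //.
  rewrite negbK => /(dvdn_leq (isT : (0 < 2)%N)) pl2.
  by move: pP p2 pl2; clear; case: p => [|[|[|]]].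
have copc : coprime c.-1 p || (c == 0%N).
  have [c0|cpos] := eqVneq c 0%N; first by rewrite c0 orbT.
  apply/orP; left.
  rewrite coprime_sym prime_coprime //; apply/negP => H2.
  move: ncop1; rewrite coprime_sym prime_coprime // negbK => H1.
  have : p %| c.+1 - c.-1 by apply: dvdn_sub.
  have -> : c.+1 - c.-1 = 2 by lia.
  move=> /(dvdn_leq (isT : (0 < 2)%N)) pl2.
  by move: pP p2 pl2; clear; case: p => [|[|[|]]].
pose u := fun g => g * (e (pi j g))^-1.
have: u h \in H.
  apply: (char_elim chH) => //.
  - move=> a b aG bG; rewrite /u piM // eM; try by apply: YG; apply: piY.
    rewrite invMg; rewrite (comm _ _ (groupVr (ezG _ bG)) (groupVr (ezG _ aG))).
    rewrite !mulgA; congr (_ * _); rewrite -!mulgA; congr (_ * _).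
    by apply: comm => //; rewrite groupV; apply: ezG.
  - by move=> g gG; rewrite /u groupM // groupV; apply: ezG.
  - move=> g gG ug1.
    have zg : pi j g \in Y by apply: piY.
    have gE : g = e (pi j g) by apply: (mulIg (e (pi j g))^-1); rewrite mulgV.
    have zc : pi j g ^+ c = pi j g by rewrite -wX //; congr (pi j); rewrite -gE.
    have z1 : pi j g = 1.
      case/orP: copc => [cop | /eqP c0]; last by rewrite -zc c0 expg0.
      apply: (ordP _ _ _ zg cop).
      apply: (mulIg (pi j g)); rewrite mul1g -expgSr prednK ?zc //.
      by move: cop; case: (c) => //; rewrite /coprime gcd0n => /eqP p1; rewrite p1 in pP.
    by rewrite gE z1 e1.
by rewrite /u groupMl // groupV.
Qed.

Lemma in_morph1' (gT rT : finGroupType) (G : {group gT}) (e : gT -> rT) :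
  {in G &, {morph e : a b / a * b}} -> e 1 = 1.
Proof. by move=> eM; apply: (mulgI (e 1)); rewrite -eM ?mulg1. Qed.

Lemma morph_in (gT : finGroupType) (G : {group gT}) (th : {morphism G >-> gT}) :
  th @* G = G -> {in G, forall k, th k \in G}.
Proof. move=> thG k kG; have: th k \in th @* G by apply: mem_morphim. by rewrite thG. Qed.

Lemma ab3 (gT : finGroupType) (G : {group gT}) : abelian G ->
  forall x1 x2 x3 y1 y2 y3, x1 \in G -> x2 \in G -> x3 \in G ->
  y1 \in G -> y2 \in G -> y3 \in G ->
  x1 * x2 * x3 * (y1 * y2 * y3) = x1 * y1 * (x2 * y2) * (x3 * y3).
Proof.
move=> abG x1 x2 x3 y1 y2 y3 h1 h2 h3 k1 k2 k3.
have cm : forall u v, u \in G -> v \in G -> u * v = v * u.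
  by move=> u v uG vG; apply: (centsP abG).
rewrite -!mulgA; congr (_ * _).
rewrite (mulgA x3 y1) (cm x3 y1) // -mulgA.
rewrite (mulgA x2 y1) (cm x2 y1) // -mulgA; congr (_ * _); congr (_ * _).
by rewrite (mulgA x3 y2) (cm x3 y2) // -mulgA.
Qed.

Lemma mainAbs (aT cT : finGroupType) (A : {group aT}) (C : {group cT})
    (phi : cT -> aT) (psi : aT -> cT) :
  (forall H : {group aT}, H \char A -> forall e : aT -> aT,
     {in A &, {morph e : u v / u * v}} -> {in A, forall g, e g \in A} ->
     {in H, forall h, e h \in H}) ->
  abelian A -> abelian C ->
  {in A, forall a, odd #[a]} ->
  {in C &, {morph phi : u v / u * v}} -> {in A &, {morph psi : u v / u * v}} ->
  {in C, forall c, phi c \in A} -> {in A, forall a, psi a \in C} ->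
  {in C, forall c, psi (phi c) = c} ->
  char_lattice_iso A (setX A C)%G.
Proof.
move=> FIA abA abC oddA phiM psiM phiA psiC psiphi.
have phiM' : morphic C phi by apply/morphicP.
pose phm := morphm_morphism phiM'.
have inpre : forall (H : {set aT}) c, (c \in phm @*^-1 H) = (c \in C) && (phi c \in H).
  by move=> H c; apply/morphpreP/andP.
have phi1 : phi 1 = 1 by apply: (in_morph1' phiM).
have psi1 : psi 1 = 1 by apply: (in_morph1' psiM).
have phiV : {in C, forall c, phi c^-1 = (phi c)^-1}.
  by move=> c cC; apply: (mulgI (phi c)); rewrite -phiM ?groupV // !mulgV.
have psiV : {in A, forall c, psi c^-1 = (psi c)^-1}.
  by move=> c cC; apply: (mulgI (psi c)); rewrite -psiM ?groupV // !mulgV.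
have commA : {in A &, forall a b, a * b = b * a}.
  by move=> a b aG bG; apply: (centsP abA).
have commC : {in C &, forall a b, a * b = b * a}.
  by move=> a b aG bG; apply: (centsP abC).
pose f := fun H : {group aT} => (setX H (phm @*^-1 H))%G.
exists f; split.
  move=> H1 H2 _ _; apply/idP/idP.
    move=> sub; apply/subsetP=> h hH1.
    have : (h, 1) \in setX H2 (phm @*^-1 H2).
      by apply: (subsetP sub); rewrite in_setX hH1 group1.
    by rewrite in_setX => /andP[].
  by move=> s; apply: setXS => //; apply: morphpreS.
have endo : forall (th : {morphism setX A C >-> (aT * cT)%type}) (m : aT -> aT * cT),
    th @* setX A C = setX A C ->
    {in A &, {morph m : u v / u * v}} -> {in A, forall g, m g \in setX A C} ->
    [/\ {in A &, {morph (fun g => (th (m g)).1) : u v / u * v}},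
        {in A, forall g, (th (m g)).1 \in A},
        {in A &, {morph (fun g => phi (th (m g)).2) : u v / u * v}} &
        {in A, forall g, phi (th (m g)).2 \in A}].
  move=> th m thG mM mA.
  have thin : forall g, g \in A -> th (m g) \in setX A C.
    by move=> g gA; apply: (morph_in thG); apply: mA.
  have thin1 : forall g, g \in A -> (th (m g)).1 \in A.
    by move=> g gA; have := thin g gA; case: (th (m g)) => a c; rewrite in_setX => /andP[].
  have thin2 : forall g, g \in A -> (th (m g)).2 \in C.
    by move=> g gA; have := thin g gA; case: (th (m g)) => a c; rewrite in_setX => /andP[].
  split => //.
  - by move=> u v uA vA /=; rewrite mM // morphM ?mA.
  - move=> u v uA vA /=; rewrite mM // morphM ?mA //=.
    by rewrite phiM ?thin2.
  - by move=> g gA; apply: phiA; apply: thin2.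
apply/setP=> K; rewrite /Char inE; apply/imsetP/idP.
  case=> H; rewrite inE => chH ->.
  have sHA : H \subset A by case/charP: chH.
  apply: char_intro.
    apply/subsetP=> [[a c]]; rewrite !in_setX inpre => /andP[aH /andP[cC _]].
    by rewrite (subsetP sHA) // cC.
  move=> th injth thG [a c]; rewrite in_setX inpre => /andP[aH /andP[cC phicH]].
  have aA : a \in A by apply: (subsetP sHA).
  have -> : (a, c) = (a, 1) * (1, c) by rewrite -[RHS]/(a * 1, 1 * c) mulg1 mul1g.
  have a1 : (a, 1) \in setX A C by rewrite in_setX aA group1.
  have c1 : (1, c) \in setX A C by rewrite in_setX group1 cC.
  rewrite morphM //; apply: (@groupM _ (f H)).
    have [e1M e1A e2M e2A] := endo th (fun g => (g, 1)) thG
      (fun u v _ _ => @pairg1_morphM aT cT u v)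
      (fun g gA => etrans (in_setX A C g 1) (introT andP (conj gA (group1 C)))).
    have := FIA H chH _ e1M e1A a aH; have := FIA H chH _ e2M e2A a aH => /=.
    have : th (a, 1) \in setX A C.
      by apply: (morph_in thG); rewrite in_setX aA group1.
    case: (th (a, 1)) => a' c' /=; rewrite in_setX => /andP[_ c'C] H2 H1.
    by rewrite in_setX H1 inpre c'C H2.
  have m2M : {in A &, {morph (fun g => ((1 : aT), psi g)) : u v / u * v}}.
    move=> u v uA vA /=; rewrite psiM //.
    by rewrite -[RHS]/(1 * 1, psi u * psi v) mulg1.
  have m2A : {in A, forall g, ((1 : aT), psi g) \in setX A C}.
    by move=> g gA; rewrite in_setX group1 psiC.
  have [e1M e1A e2M e2A] := endo th _ thG m2M m2A.
  have := FIA H chH _ e1M e1A _ phicH; have := FIA H chH _ e2M e2A _ phicH => /=.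
  rewrite psiphi //.
  have : th (1, c) \in setX A C.
    by apply: (morph_in thG); rewrite in_setX cC group1.
  case: (th (1, c)) => a' c' /=; rewrite in_setX => /andP[_ c'C] H2 H1.
  by rewrite in_setX H1 inpre c'C H2.
move=> chK.
have sKAC : K \subset setX A C by case/charP: chK.
pose KA := ((@pairg1 aT cT) @*^-1 K)%G.
have inKA : forall a, (a \in KA) = ((a, 1) \in K).
  by move=> a; rewrite !inE.
have KAA : forall a, a \in KA -> a \in A.
  by move=> a; rewrite inKA => /(subsetP sKAC); rewrite in_setX => /andP[].
have KC : forall a c, (a, c) \in K -> (a \in A) && (c \in C).
  by move=> a c /(subsetP sKAC); rewrite in_setX.
(* swap automorphism *)
pose tau := fun k : aT * cT => (k.1 * (phi (psi k.1))^-1 * phi k.2, psi k.1).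
have tauK : {in K, forall k, tau k \in K}.
  apply: (char_elim chK).
  - move=> [a c] [b d]; rewrite !in_setX => /andP[aA cC] /andP[bA dC].
    rewrite /tau -[(a, c) * (b, d)]/(a * b, c * d) /=.
    rewrite -[RHS]/(_ * _, _ * _) psiM // phiM ?psiC // phiM //.
    congr pair.
    have pa : phi (psi a) \in A by apply/phiA/psiC.
    have pb : phi (psi b) \in A by apply/phiA/psiC.
    have pc : phi c \in A by apply/phiA.
    have pd : phi d \in A by apply/phiA.
    rewrite invMg (commA (phi (psi b))^-1) ?groupV //.
    by rewrite [RHS](ab3 abA) ?groupV.
  - move=> [a c]; rewrite !in_setX /tau /= => /andP[aA cC].
    by rewrite psiC // !groupM ?groupV ?phiA ?psiC.
  - move=> [a c]; rewrite in_setX /tau /= => /andP[aA cC] [e1 e2].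
    rewrite e2 phi1 invg1 mulg1 in e1.
    have ea : a = (phi c)^-1 by apply: (mulIg (phi c)); rewrite mulVg.
    have ec : c^-1 = 1 by rewrite -(psiphi (c^-1)) ?groupV // phiV // -ea.
    have c1 : c = 1 by rewrite -(invgK c) ec invg1.
    by rewrite ea c1 phi1 invg1.
have invK : {in K, forall k, (k.1, k.2^-1) \in K}.
  apply: (char_elim chK).
  - move=> [a c] [b d]; rewrite !in_setX => /andP[aA cC] /andP[bA dC].
    rewrite -[(a, c) * (b, d)]/(a * b, c * d) /= -[RHS]/(_ * _, _ * _).
    by rewrite invMg commC ?groupV.
  - by move=> [a c]; rewrite !in_setX /= => /andP[-> cC]; rewrite groupV.
  - move=> [a c]; rewrite in_setX /= => /andP[aA cC] [-> e2].
    by rewrite -(invgK c) e2 invg1.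
exists KA.
  rewrite inE; apply: char_intro.
    by apply/subsetP => a; apply: KAA.
  move=> sg injsg sgG a; rewrite !inKA => aK.
  have aA : a \in A by case/andP: (KC _ _ aK).
  pose u := fun k : aT * cT => (sg k.1, k.2).
  have : u (a, 1) \in K.
    apply: (char_elim chK) => //.
    - move=> [b c] [b' c']; rewrite !in_setX => /andP[bA cC] /andP[b'A c'C].
      rewrite /u -[(b, c) * (b', c')]/(b * b', c * c') /= -[RHS]/(_ * _, _ * _).
      by rewrite morphM.
    - move=> [b c]; rewrite !in_setX /u /= => /andP[bA ->]; rewrite andbT.
      by apply: (morph_in sgG).
    - move=> [b c]; rewrite in_setX /u /= => /andP[bA cC] [e1 ->].
      congr pair; apply: (injmP injsg) => //; by rewrite e1 morph1.
  by [].
apply: val_inj => /=; apply/setP => [[a c]]; rewrite in_setX inpre.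
apply/idP/idP.
  move=> acK; have /andP[aA cC] := KC _ _ acK.
  have := invK _ acK; rewrite /= => acK'.
  have aaK : (a * a) \in KA.
    have := groupM acK acK'.
    by rewrite inKA -[(a, c) * _]/(a * a, c * c^-1) mulgV.
  have aKA : a \in KA.
    have -> : a = (a * a) ^+ (#[a].+1)./2.
      have -> : a * a = a ^+ 2 by rewrite expgS expg1.
      rewrite -expgM.
      have : odd #[a] by apply: oddA.
      move: (expg_order a); set o := #[a] => ao oo.
      have -> : (2 * (o.+1)./2 = o.+1)%N.
        by rewrite -{2}(odd_double_half o.+1) /= oo mul2n.
      by rewrite expgS ao mulg1.
    by apply: groupX.
  rewrite aKA cC /=.
  have c1K : (1, c) \in K.
    have aK : (a, 1) \in K by rewrite -inKA.
    have : (a, 1)^-1 * (a, c) \in K by rewrite groupM ?groupV.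
    by rewrite -[(a, 1)^-1 * (a, c)]/(a^-1 * a, 1^-1 * c) mulVg invg1 mul1g.
  have := tauK _ c1K; rewrite /tau /= psi1 phi1 invg1 !mul1g => H.
  by rewrite inKA.
case/and3P=> aKA cC phcKA.
have H1 : (a, 1) \in K by rewrite -inKA.
have H2 : (phi c, 1) \in K by rewrite -inKA.
have := tauK _ H2; rewrite /tau /= psiphi // phi1 mulgV mul1g => H3.
have := groupM H1 H3.
by rewrite -[(a, 1) * (1, c)]/(a * 1, 1 * c) mulg1 mul1g.
Qed.
Unset Implicit Arguments.

Theorem mainTheorem8 (p n : nat) (lam : 'I_n -> nat)
    (gT : finGroupType) (G : {group gT}) (x : 'I_n -> gT) (i : 'I_n) :
  prime p -> p != 2 ->
  (forall j, 0 < lam j) ->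
  (forall j k : 'I_n, j <= k -> lam j <= lam k) ->
  (forall j, #[x j] = (p ^ lam j)%N) ->
  \big[dprod/1]_(j < n) <[x j]> = G ->
  char_lattice_iso G (setX G (Zp (p ^ lam i)%N))%G.
Proof.
move=> pP p2 lam0 lamle ord defG.
pose R := fun j : 'I_n => \big[dprod/1]_(k | k != j) <[x k]>.
have defj : forall j, <[x j]> \x R j = G.
  by move=> j; rewrite -defG (bigD1 j isT).
have [Rg RgE] : exists Rg : 'I_n -> {group gT}, forall j, R j = Rg j.
  exists (fun j => <<R j>>%G) => j /=.
  have [[_ H _ ->] _ _ _] := dprodP (defj j); by rewrite genGid.
have GE : forall j, <[x j]> * Rg j = G.
  by move=> j; have [_ <- _ _] := dprodP (defj j); rewrite RgE.
have xG : forall j, <[x j]> \subset G.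
  by move=> j; rewrite -(GE j) mulG_subl.
have RG : forall j, Rg j \subset G.
  by move=> j; rewrite -(GE j) mulG_subr.
have cxR : forall j, Rg j \subset 'C(<[x j]>).
  by move=> j; have [_ _ cx _] := dprodP (defj j); rewrite -RgE.
have compl : forall j, Rg j \in [complements to <[x j]> in G].
  move=> j; have [_ _ _ TI] := dprodP (defj j); apply/complP.
  by rewrite GE -RgE.
have xRg : forall j k, k != j -> <[x k]> \subset Rg j.
  move=> j k kj.
  have := @bigdprodWY _ _ (index_enum 'I_n) (fun k => k != j) (fun k => <[x k]>) (Rg j) (RgE j) => <-.
  by apply: sub_gen; apply: (bigcup_max k).
pose pi := fun j g => divgr <[x j]> (R j) g.
have piM : forall j, {in G &, {morph pi j : u v / u * v}}.
  by move=> j; rewrite /pi RgE; apply: divgrM.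
have piY : forall j, {in G, forall g, pi j g \in <[x j]>}.
  move=> j g gG; rewrite /pi RgE; apply: mem_divgr.
  by rewrite GE.
have TI : forall j, <[x j]> :&: Rg j = 1.
  by move=> j; have /complP[] := compl j.
have piR : forall j h, h \in Rg j -> pi j h = 1.
  by move=> j h hR; rewrite /pi RgE -(mul1g h) (divgrMid (TI j)) ?group1 ?mulg1.
have piX : forall j h, h \in <[x j]> -> pi j h = h.
  by move=> j h hX; rewrite /pi RgE -{1}(mulg1 h) (divgrMid (TI j)) ?group1 ?mulg1.
have dec : forall g, g \in G -> g = \prod_j pi j g.
  move=> g gG; have [c [cx gc _]] := mem_bigdprod defG gG.
  have pic : forall j, pi j g = c j.
    move=> j; have pM : morphic G (pi j) by apply/morphicP; exact: piM j.
    rewrite gc.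
    have := @morph_prod _ _ G (morphm_morphism pM) _ (index_enum 'I_n) predT c.
    rewrite /= /morphm => ->; last by move=> k _; apply: (subsetP (xG k)); apply: cx.
    rewrite (eq_bigr (fun k => if k == j then c k else 1)); last first.
      move=> k _; case: eqP => [->|/eqP kj]; first by apply: piX; apply: cx.
      by apply: piR; apply: (subsetP (xRg _ _ kj)); apply: cx.
    by rewrite -big_mkcond big_pred1_eq.
  by rewrite {1}gc; apply: eq_bigr => j _; rewrite pic.
have abG : abelian G.
  have := bigdprodWY defG => <-; rewrite abelian_gen.
  apply/centsP => u /bigcupP[j _ uj] v /bigcupP[k _ vk].
  case: (eqVneq k j) => [kj | kj].
    by rewrite kj in vk; apply: (centsP (cycle_abelian (x j))).
  have : v \in 'C(<[x j]>) by apply: (subsetP (cxR j)); apply: (subsetP (xRg _ _ kj)).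
  by move/centP => /(_ u uj) /esym.
have oddp : odd p by case: (even_prime pP) => // p2'; rewrite p2' in p2.
have oddG : odd #|G|.
  rewrite -(bigdprod_card defG).
  apply: (big_ind odd) => //; first by move=> a b oa ob; rewrite oddM oa ob.
  by move=> j _; rewrite [#|_|]ord oddX oddp orbT.
have oddA : {in G, forall a, odd #[a]}.
  by move=> a aG; apply: dvdn_odd oddG; apply: order_dvdG.
have ordP : forall j z k, z \in <[x j]> -> coprime k p -> z ^+ k = 1 -> z = 1.
  move=> j z k zx cop zk.
  have d1 : #[z] %| #[x j] by apply: order_dvdG.
  have d2 : #[z] %| k by rewrite order_dvdn zk.
  have : #[z] %| gcdn #[x j] k by rewrite dvdn_gcd d1 d2.
  rewrite ord; rewrite coprime_sym in cop; have := coprimeXl (lam j) cop.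
  move=> /eqP ->; rewrite dvdn1 order_eq1 => /eqP //.
have FIA : forall H : {group gT}, H \char G -> forall e : gT -> gT,
     {in G &, {morph e : u v / u * v}} -> {in G, forall g, e g \in G} ->
     {in H, forall h, e h \in H}.
  by move=> H chH e eM eG; apply: (FI pP p2 abG piM piY xG ordP dec chH eM eG).
rewrite -(ord i).
set a := x i.
have Zim : Zpm (a := a) @* Zp #[a] = <[a]> := im_Zpm a.
apply: (mainAbs (phi := Zpm (a := a))
          (psi := fun g => invm (injm_Zpm a) (pi i g)) FIA abG).
- by apply: abelianS (subsetT _) (Zp_abelian _).
- exact: oddA.
- exact: ZpmM.
- move=> u v uG vG /=; rewrite piM // morphM //= Zim; exact: piY.
- by move=> c cC; apply: (subsetP (xG i)); rewrite /Zpm mem_cycle.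
- move=> g gG /=.
  have : pi i g \in Zpm (a := a) @* Zp #[a] by rewrite Zim; apply: piY.
  by case/morphimP => k _ kZ ->; rewrite invmE.
- move=> c cC /=; rewrite piX; last by rewrite /Zpm mem_cycle.
  exact: invmE.
Qed.
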